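(* Let $T\in K\{X\}_\infty$ be a monomial, $x_k\in X$, and let $I_k\subseteq\mathrm{Le}(T)$ be the set of leaves of $T$ labelled $x_k$. Then for every $j$, $$\partial_{kj}(T)=\sum_{\nu\in I_k}T_{\nu\to x_j},$$ where $T_{\nu\to x_j}$ is the tree obtained from $T$ by relabelling the leaf $\nu$ by $x_j$, and $$\partial_k(T)=\sum_{\nu\in I_k}\mathrm{red}\bigl(T|\{\nu\}^c\bigr),$$ where $\{\nu\}^c=\mathrm{Le}(T)\setminus\{\nu\}$.
   Context: $K$ is a field of characteristic $0$, $X=\{x_1,x_2,\dots\}$ a finite or countable set of variables. A planar rooted tree is reduced if no vertex has exactly one incoming edge. $K\{X\}_\infty$ has basis the monomials: the empty tree $1$ and all planar reduced rooted trees with leaves labelled by elements of $X$; for $k\ge2$, $\vee^k$ grafts $k$ nonempty trees (in order) onto a new root, extended multilinearly, with unit conventions (arguments $1$ omitted, $\vee^1=\mathrm{id}$, $\vee^k(1,\dots,1)=1$). A derivation $D$ is a linear map with $D(\vee^n(v_1,\dots,v_n))=\sum_i\vee^n(v_1,\dots,D(v_i),\dots,v_n)$ and $D|_K=0$. $\partial_k$ is the derivation with $\partial_k(x_l)=\delta_{kl}$; $\partial_{kj}$ is the derivation with $\partial_{kj}(x_l)=x_j$ if $l=k$ and $0$ otherwise. $\mathrm{Le}(T)$ is the set of leaves of $T$. For $I\subseteq\mathrm{Le}(T)$, $T|I$ is obtained from $T$ by deleting every vertex whose full subtree (vertex plus descendants) contains no leaf of $I$ (empty tree $1$ if $I=\emptyset$);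 $\mathrm{red}(S)$ deletes all vertices with exactly one child, keeping labels, the descendant relation and the planar order. *)

(* Defs.v *)
From HB Require Import structures.
From mathcomp Require Import all_boot all_order all_algebra.
From mathcomp Require Import finmap.
From mathcomp.multinomials Require Import monalg.

Set Implicit Arguments.
Unset Strict Implicit.
Unset Printing Implicit Defensive.

Import Order.TTheory GRing.Theory Num.Theory.
Local Open Scope ring_scope.

Section Trees.
Variable X : countType.

Inductive tree : Type :=
| Leaf of X
| Node of seq tree.

Fixpoint tree_encode (t : tree) : GenTree.tree X :=
  match t with
  | Leaf x => GenTree.Leaf x
  | Node ts => GenTree.Node 0 (map tree_encode ts)
  end.

Fixpoint tree_decode (g : GenTree.tree X) : tree :=
  match g with
  | GenTree.Leaf x => Leaf x
  | GenTree.Node _ gs => Node (map tree_decode gs)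
  end.

Fixpoint tree_codeK (t : tree) : tree_decode (tree_encode t) = t :=
  match t return tree_decode (tree_encode t) = t with
  | Leaf x => erefl
  | Node ts => f_equal Node
      ((fix aux (us : seq tree) :
          map tree_decode (map tree_encode us) = us :=
         match us with
         | [::] => erefl
         | u :: us' => f_equal2 cons (tree_codeK u) (aux us')
         end) ts)
  end.

End Trees.

Arguments Leaf {X}.
Arguments Node {X}.

HB.instance Definition _ (X : countType) :=
  Countable.copy (tree X) (can_type (@tree_codeK X)).

Section TreeOps.
Variable X : countType.
Implicit Types (t : tree X) (ts : seq (tree X)).

Fixpoint reduced t : bool :=
  match t with
  | Leaf _ => true
  | Node ts => (1 < size ts)%N && all reduced ts
  end.

(* the (possibly empty) tree: None is the empty tree 1 *)
Definition reducedo (o : option (tree X)) : bool :=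
  if o is Some t then reduced t else true.

Fixpoint leaves t : seq X :=
  match t with
  | Leaf x => [:: x]
  | Node ts => flatten (map leaves ts)
  end.

Definition nleaves t := size (leaves t).

Definition leaveso (o : option (tree X)) : seq X :=
  if o is Some t then leaves t else [::].

(* map every leaf label, knowing the index of the leaf (left-to-right,
   starting at 0) *)
Fixpoint mapl (f : nat -> X -> X) t : tree X :=
  match t with
  | Leaf x => Leaf (f 0%N x)
  | Node ts => Node
      ((fix inner (g : nat -> X -> X) (us : seq (tree X)) :=
          match us with
          | [::] => [::]
          | u :: us' => mapl g u :: inner (fun n => g (n + nleaves u)%N) us'
          end) f ts)
  end.

(* T_{nu -> y}: relabel the leaf of index i by y *)
Definition relabel (i : nat) (y : X) t : tree X :=
  mapl (fun n x => if n == i then y else x) t.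

(* T|I, for a set I of leaf indices: delete every vertex whose full
   subtree contains no leaf of I (None = the empty tree 1) *)
Fixpoint restr (I : pred nat) t : option (tree X) :=
  match t with
  | Leaf x => if I 0%N then Some (Leaf x) else None
  | Node ts =>
      let cs := (fix inner (J : pred nat) (us : seq (tree X)) :=
          match us with
          | [::] => [::]
          | u :: us' =>
              let J' := fun n => J (n + nleaves u)%N in
              match restr J u with
              | Some v => v :: inner J' us'
              | None => inner J' us'
              end
          end) I ts in
      if cs is [::] then None else Some (Node cs)
  end.

Fixpoint red t : tree X :=
  match t with
  | Leaf x => Leaf x
  | Node ts =>
      match ts with
      | [:: u] => red u
      | _ => Node (map red ts)
      end
  end.

End TreeOps.

(* Monomials of K{X}_oo: the empty tree and the reduced planar rooted  *)
(* trees with leaves labelled in X.                                   *)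
Notation mono X := {o : option (tree X) | reducedo o}.

Definition mono1 (X : countType) : mono X := exist _ None isT.

(* the monomial represented by a (reduced) tree, defaulting to 1 *)
Definition mk_mono (X : countType) (o : option (tree X)) : mono X :=
  insubd (mono1 X) o.

Notation KX K X := {malg K[mono X]}.

(* grafting of monomials, with the unit conventions *)
Definition vee_mono (X : countType) (ms : seq (mono X)) : mono X :=
  match pmap (fun m : mono X => val m) ms with
  | [::] => mono1 X
  | [:: t] => mk_mono (Some t)
  | ts => mk_mono (Some (Node ts))
  end.

Fixpoint multilin (K : fieldType) (X : countType)
    (f : seq (mono X) -> KX K X) (vs : seq (KX K X)) : KX K X :=
  match vs with
  | [::] => f [::]
  | v :: vs' =>
      \sum_(m <- msupp v) v@_m *: multilin (fun ms => f (m :: ms)) vs'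
  end.

Definition vee (K : fieldType) (X : countType) (vs : seq (KX K X)) : KX K X :=
  multilin (fun ms => << vee_mono ms >>) vs.

Definition xvar (K : fieldType) (X : countType) (x : X) : KX K X :=
  << mk_mono (Some (Leaf x)) >>.

Definition is_derivation (K : fieldType) (X : countType)
    (D : {linear KX K X -> KX K X}) : Prop :=
  (forall c : K, D (c *: << mono1 X >>) = 0) /\
  (forall vs : seq (KX K X), (2 <= size vs)%N ->
     D (vee vs) = \sum_(i < size vs) vee (set_nth 0 vs i (D (nth 0 vs i)))).

Definition is_partial (K : fieldType) (X : countType) (k : X)
    (D : {linear KX K X -> KX K X}) : Prop :=
  is_derivation D /\
  forall l : X, D (xvar K l) = (l == k)%:R *: << mono1 X >>.

Definition is_partial2 (K : fieldType) (X : countType) (k j : X)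
    (D : {linear KX K X -> KX K X}) : Prop :=
  is_derivation D /\
  forall l : X, D (xvar K l) = if l == k then xvar K j else 0.

(* Main.v *)
Require Import Defs.
From HB Require Import structures.
From mathcomp Require Import all_boot all_order all_algebra.
From mathcomp Require Import finmap.
From mathcomp.multinomials Require Import monalg.
From Stdlib Require Import FunctionalExtensionality.
From Stdlib Require List.
From mathcomp Require Import zify.
Import GRing.Theory.
Set Implicit Arguments.
Unset Strict Implicit.
Local Open Scope ring_scope.

Section TreeLemmas.
Variable X : countType.
Implicit Types (t : tree X) (ts : seq (tree X)).

Section Ind.
Variable P : tree X -> Prop.
Hypothesis HL : forall x, P (Leaf x).
Hypothesis HN : forall ts, (forall t, List.In t ts -> P t) -> P (Node ts).
Fixpoint tree_ind2 t : P t :=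
  match t with
  | Leaf x => HL x
  | Node ts => @HN ts ((fix aux (us : seq (tree X)) : forall u, List.In u us -> P u :=
       match us with
       | [::] => fun u H => False_ind _ H
       | u' :: us' => fun u H => match H with
                    | or_introl e => eq_ind u' P (tree_ind2 u') u e
                    | or_intror H' => aux us' u H' end
       end) ts)
  end.
End Ind.

Fixpoint mapls (f : nat -> X -> X) ts : seq (tree X) :=
  match ts with
  | [::] => [::]
  | u :: us' => mapl f u :: mapls (fun n => f (n + nleaves u)%N) us'
  end.

Lemma maplN f ts : mapl f (Node ts) = Node (mapls f ts).
Proof. by []. Qed.

Definition ocons (o : option (tree X)) s := if o is Some v then v :: s else s.

Fixpoint restrs (I : pred nat) ts : seq (tree X) :=
  match ts with
  | [::] => [::]
  | u :: us => ocons (restr I u) (restrs (fun n => I (n + nleaves u)%N) us)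
  end.

Lemma restrN I ts : restr I (Node ts) =
   if restrs I ts is [::] then None else Some (Node (restrs I ts)).
Proof.
rewrite /=; congr (match _ with [::] => _ | _ => _ end).
all: try by elim: ts I => //= u us IH I; rewrite IH; case: (restr I u).
Qed.

Lemma nleavesN ts : nleaves (Node ts) = sumn (map (@nleaves X) ts).
Proof. by rewrite /nleaves /= size_flatten /shape -map_comp. Qed.

Definition offs ts i := sumn (map (@nleaves X) (take i ts)).

Lemma mapl_id f t : (forall m x, (m < nleaves t)%N -> f m x = x) -> mapl f t = t.
Proof.
elim/tree_ind2: t f => [x|ts IH] f H /=; first by rewrite H.
congr Node; elim: ts IH f H => //= u us IHs IH f H.
rewrite nleavesN /= in H.
rewrite IH; [|by left|by move=> m x Hm; apply: H; rewrite ltn_addr].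
rewrite IHs //; first by move=> t Ht; apply: IH; right.
move=> m x Hm; apply: H; rewrite nleavesN in Hm. by rewrite addnC ltn_add2l.
Qed.

Lemma mapls_id f ts : (forall m x, (m < sumn (map (@nleaves X) ts))%N -> f m x = x) ->
  mapls f ts = ts.
Proof. by move=> H; have := @mapl_id f (Node ts); rewrite nleavesN => /(_ H) [] . Qed.

Lemma mapls_one f ts i t0 : (i < size ts)%N ->
  (forall m x, (m < offs ts i)%N -> f m x = x) ->
  (forall m x, (offs ts i.+1 <= m)%N -> f m x = x) ->
  mapls f ts = take i ts ++ mapl (fun m => f (m + offs ts i)%N) (nth t0 ts i) :: drop i.+1 ts.
Proof.
elim: ts f i => //= u us IH f [|i] Hi H1 H2 /=.
  have -> : (fun m => f (m + 0)%N) = f by apply: functional_extensionality => m; rewrite addn0.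
  rewrite drop0 mapls_id // => m x Hm; apply: H2; rewrite /offs /=.
  by rewrite take0 /= addn0 leq_addl.
rewrite mapl_id; last by move=> m x Hm; apply: H1; rewrite /offs /=; apply: leq_trans Hm (leq_addr _ _).
rewrite (IH _ i) //.
- congr (_ :: _ ++ mapl _ _ :: _); apply: functional_extensionality => m.
  by rewrite /offs /= -addnA [(nleaves u + _)%N]addnC.
- by move=> m x Hm; apply: H1; rewrite /offs /= addnC ltn_add2l.
- by move=> m x Hm; apply: H2; rewrite /offs /= addnC leq_add2r.
Qed.

Lemma mapl_shape f t : reduced (mapl f t) = reduced t /\ nleaves (mapl f t) = nleaves t.
Proof.
elim/tree_ind2: t f => [x|ts IH] f; first by [].
rewrite maplN /=.
suff: [/\ size (mapls f ts) = size ts, all (@reduced X) (mapls f ts) = all (@reduced X) ts &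
         map (@nleaves X) (mapls f ts) = map (@nleaves X) ts].
  by case=> -> -> E; rewrite !nleavesN E.
elim: ts IH f => //= u us IHs IH f.
have [-> ->] := IH u (or_introl erefl) f.
have [-> -> ->] // := IHs (fun t Ht => IH t (or_intror Ht)) (fun n => f (n + nleaves u)%N).
Qed.

Lemma restr_full (I : pred nat) t : reduced t -> (forall m, (m < nleaves t)%N -> I m) -> restr I t = Some t.
Proof.
elim/tree_ind2: t I => [x|ts IH] I; first by move=> _ H; rewrite /= H.
move=> /andP[Hs Hr] H; rewrite restrN.
suff -> : restrs I ts = ts by case: ts Hs {IH Hr H}.
rewrite nleavesN in H.
elim: ts IH I H {Hs} Hr => //= u us IHs IH I H /andP[ru rus].
rewrite (IH u (or_introl erefl)) //=; last first.
  by move=> m Hm; apply: H; apply: leq_trans Hm (leq_addr _ _).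
rewrite IHs //; first by move=> t Ht; apply: IH; right.
by move=> m Hm; apply: H; rewrite addnC ltn_add2l.
Qed.

Lemma restrs_full (I : pred nat) ts : all (@reduced X) ts ->
  (forall m, (m < sumn (map (@nleaves X) ts))%N -> I m) -> restrs I ts = ts.
Proof.
elim: ts I => //= u us IH I /andP[ru rus] H.
rewrite restr_full //=; last by move=> m Hm; apply: H; apply: leq_trans Hm (leq_addr _ _).
by rewrite IH // => m Hm; apply: H; rewrite addnC ltn_add2l.
Qed.

Lemma restrs_one (I : pred nat) ts i t0 : (i < size ts)%N -> all (@reduced X) ts ->
  (forall m, (m < offs ts i)%N -> I m) ->
  (forall m, (offs ts i.+1 <= m)%N -> I m) ->
  restrs I ts = take i ts ++ ocons (restr (fun m => I (m + offs ts i)%N) (nth t0 ts i)) (drop i.+1 ts).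
Proof.
elim: ts I i => //= u us IH I [|i] Hi /andP[ru rus] H1 H2 /=.
  have -> : (fun m => I (m + 0)%N) = I by apply: functional_extensionality => m; rewrite addn0.
  rewrite drop0 restrs_full //.
  by move=> m Hm; apply: H2; rewrite /offs /= take0 /= addn0 leq_addl.
rewrite restr_full //; last by move=> m Hm; apply: H1; rewrite /offs /=; apply: leq_trans Hm (leq_addr _ _).
rewrite (IH _ i) //=.
- congr (_ :: _ ++ ocons (restr _ _) _); apply: functional_extensionality => m.
  by rewrite /offs /= -addnA [(nleaves u + _)%N]addnC.
- by move=> m Hm; apply: H1; rewrite /offs /= addnC ltn_add2l.
- by move=> m Hm; apply: H2; rewrite /offs /= addnC leq_add2r.
Qed.

Fixpoint ne t : bool :=
  match t with
  | Leaf _ => true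
  | Node ts => (0 < size ts)%N && all ne ts
  end.

Lemma restr_ne (I : pred nat) t v : restr I t = Some v -> ne v.
Proof.
elim/tree_ind2: t I v => [x|ts IH] I v; first by rewrite /=; case: (I 0%N) => // -[<-].
rewrite restrN.
have : all ne (restrs I ts).
  elim: ts IH I {v} => //= u us IHs IH I.
  case E: (restr I u) => [w|] /=; last by apply: IHs => t Ht; apply: IH; right.
  rewrite (IH u (or_introl erefl) _ _ E) /=.
  by apply: IHs => t Ht; apply: IH; right.
by case: (restrs I ts) => // w ws Ha [<-] /=.
Qed.

Lemma memIn t ts : t \in ts -> List.In t ts.
Proof. elim: ts => //= u us IH; rewrite in_cons => /orP[/eqP->|/IH]; [by left|by right]. Qed.

Lemma red_reduced t : ne t -> reduced (red t).
Proof.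
elim/tree_ind2: t => [x|ts IH] //= /andP[Hs Ha].
case: ts IH Hs Ha => // u [|u2 us] IH _.
  by rewrite /= andbT => Hu; apply: IH => //; left.
move=> Ha; suff: all (@reduced X) (map (@red X) [:: u, u2 & us]) by [].
apply/allP => t /mapP[w Hw ->]; apply: IH; first exact: memIn.
by move/allP: Ha; apply.
Qed.

Lemma red_id t : reduced t -> red t = t.
Proof.
elim/tree_ind2: t => [x|ts IH] //= /andP[Hs Ha].
have E : map (@red X) ts = ts.
  rewrite -[RHS]map_id; apply/eq_in_map => w Hw; apply: IH; first exact: memIn.
  by move/allP: Ha; apply.
by case: ts Hs IH Ha E => // u [|u2 us] // _ _ _ ->.
Qed.

Lemma reducedo_red (I : pred nat) t : reducedo (omap (@red X) (restr I t)).
Proof. by case E: (restr I t) => [v|] //=; apply: red_reduced; apply: restr_ne E. Qed.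
End TreeLemmas.

Lemma reindex (X : eqType) (V : nmodType) (k : X) (ls : seq (seq X)) (G : nat -> V) :
 \sum_(0 <= n < size (flatten ls) | nth k (flatten ls) n == k) G n =
 \sum_(0 <= i < size ls) \sum_(0 <= n < size (nth [::] ls i) | nth k (nth [::] ls i) n == k)
     G (sumn (map size (take i ls)) + n)%N.
Proof.
elim: ls G => [|l ls IH] G; first by rewrite !big_geq.
rewrite /= size_cat (@big_cat_nat _ _ _ (size l)) ?leq_addr //=.
rewrite big_nat_recl //=; congr (_ + _).
  rewrite big_mkcond [RHS]big_mkcond /=; apply: eq_big_nat => n /andP[_ Hn].
  by rewrite nth_cat Hn add0n.
rewrite -[X in \big[_/_]_(X <= _ < _ | _) _]add0n big_addn addKn.
transitivity (\sum_(0 <= n < size (flatten ls) | nth k (flatten ls) n == k) G (n + size l)%N).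
  rewrite big_mkcond [RHS]big_mkcond; apply: eq_big_nat => n Hn.
  by rewrite nth_cat ltnNge leq_addl /= addnK.
rewrite IH.
apply: eq_big_nat => i Hi; apply: eq_bigr => n _.
by rewrite addnC addnA.
Qed.

Local Open Scope fset_scope.
Local Open Scope ring_scope.
Section Alg.
Variables (K : fieldType) (X : countType).
Implicit Types (t : tree X) (ts : seq (tree X)).
Local Notation V := (KX K X).
Local Notation tnil := (@Node X [::]).

Definition mk (m : mono X) : V := << m >>.
Definition mkm t : mono X := mk_mono (Some t).
Definition ext (F : mono X -> V) (v : V) : V := \sum_(m <- msupp v) v@_m *: F m.

Lemma extw F v (d : {fset mono X}) : msupp v `<=` d -> ext F v = \sum_(m <- d) v@_m *: F m.
Proof.
move=> le; rewrite /ext [LHS](big_fset_incl _ le) => //= x xd /mcoeff_outdom ->.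
by rewrite scale0r.
Qed.
Arguments extw F {v d}.

Lemma extD F u v : ext F (u + v) = ext F u + ext F v.
Proof.
rewrite (extw F (msuppD_le u v)) (extw F (fsubsetUl (msupp u) (msupp v))).
rewrite (extw F (fsubsetUr (msupp u) (msupp v))) -big_split /=.
by apply: eq_bigr => m _; rewrite -scalerDl -(mcoeffD m u v).
Qed.

Lemma ext0 F : ext F 0 = 0.
Proof. by rewrite /ext msupp0 big_seq_fset0. Qed.

Lemma extU F m : ext F (mk m) = F m.
Proof. by rewrite (extw F msuppU_le) big_seq_fset1 mcoeffUU scale1r. Qed.

Lemma multilin_mono (f : seq (mono X) -> V) ms : multilin f (map mk ms) = f ms.
Proof.
elim: ms f => //= m ms IH f.
by rewrite -/(ext _ _) extU IH.
Qed.

Lemma multilin_set (f : seq (mono X) -> V) ms i v : (i < size ms)%N ->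
  multilin f (set_nth 0 (map mk ms) i v) = ext (fun m => f (set_nth (mono1 X) ms i m)) v.
Proof.
elim: ms f i => [|m ms IH] f [|i] Hi; [discriminate Hi|discriminate Hi| |].
  change (ext (fun m' => multilin (fun l => f (m' :: l)) (map mk ms)) v =
          ext (fun m' => f (m' :: ms)) v).
  have -> : (fun m' => multilin (fun l => f (m' :: l)) (map mk ms)) = (fun m' => f (m' :: ms)).
    by apply: functional_extensionality => m'; rewrite multilin_mono.
  reflexivity.
change (ext (fun m' => multilin (fun l => f (m' :: l)) (set_nth 0 (map mk ms) i v)) (mk m) =
        ext (fun m' => f (m :: set_nth (mono1 X) ms i m')) v).
by rewrite extU IH.
Qed.

Lemma val_mkm t : reduced t -> val (mkm t) = Some t.
Proof. by move=> H; rewrite /mkm /mk_mono insubdK. Qed.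

Lemma pmap_mkm ts : all (@reduced X) ts -> pmap val (map mkm ts) = ts.
Proof. by elim: ts => //= u us IH /andP[ru rus]; rewrite val_mkm //= IH. Qed.

Lemma set_nth_cat (T : Type) (s : seq T) x0 i y : (i < size s)%N ->
  set_nth x0 s i y = take i s ++ y :: drop i.+1 s.
Proof. by elim: s i => //= a s IH [|i] Hi /=; rewrite ?drop0 ?IH. Qed.

Lemma all_take_drop (P : pred (tree X)) ts i :
  all P ts -> all P (take i ts) /\ all P (drop i ts).
Proof. by rewrite -{1}(cat_take_drop i ts) all_cat => /andP. Qed.

Lemma pmap_set ts i m : (i < size ts)%N -> all (@reduced X) ts ->
  pmap val (set_nth (mono1 X) (map mkm ts) i m) = take i ts ++ ocons (val m) (drop i.+1 ts).
Proof.
move=> Hi Ha; rewrite set_nth_cat ?size_map // pmap_cat -map_take /= -map_drop.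
have [H1 _] := all_take_drop i Ha; have [_ H2] := all_take_drop i.+1 Ha.
by rewrite !pmap_mkm //; case: (val m).
Qed.

Lemma map_red_id s : all (@reduced X) s -> map (@red X) s = s.
Proof. by elim: s => //= u us IH /andP[ru rus]; rewrite red_id // IH. Qed.

Lemma vee_mono_red ms C : pmap val ms = map (@red X) C -> (0 < size C)%N ->
  vee_mono ms = mkm (red (Node C)).
Proof. by rewrite /vee_mono => ->; case: C => [|u [|u2 r]]. Qed.

Lemma offsS ts i : (i < size ts)%N -> offs ts i.+1 = (offs ts i + nleaves (nth tnil ts i))%N.
Proof. by move=> Hi; rewrite /offs (take_nth tnil Hi) map_rcons sumn_rcons. Qed.

Lemma nth_in ts i : (i < size ts)%N -> List.In (nth tnil ts i) ts.
Proof. by move=> Hi; apply: memIn; rewrite mem_nth. Qed.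

Variable k : X.

Lemma deriv_node (D : {linear V -> V}) ts (Phi : tree X -> nat -> mono X) :
  is_derivation D -> reduced (Node ts) ->
  (forall i, (i < size ts)%N -> D (mk (mkm (nth tnil ts i))) =
     \sum_(0 <= n < nleaves (nth tnil ts i) | nth k (leaves (nth tnil ts i)) n == k)
        mk (Phi (nth tnil ts i) n)) ->
  D (mk (mkm (Node ts))) = \sum_(0 <= i < size ts)
     \sum_(0 <= n < nleaves (nth tnil ts i) | nth k (leaves (nth tnil ts i)) n == k)
        mk (vee_mono (set_nth (mono1 X) (map mkm ts) i (Phi (nth tnil ts i) n))).
Proof.
move=> [_ Hd] Hr IH.
have /andP[Hs Ha] := Hr.
set vs := map mk (map mkm ts).
have -> : mk (mkm (Node ts)) = vee vs.
  rewrite /vee multilin_mono; congr mk; symmetry.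
  rewrite (@vee_mono_red _ ts) ?red_id //; last by apply: leq_trans Hs.
  by rewrite pmap_mkm // map_red_id.
rewrite Hd; last by rewrite !size_map.
rewrite -(big_mkord xpredT (fun i => vee (set_nth 0 vs i (D (nth 0 vs i))))) !size_map.
apply: eq_big_nat => i /andP[_ Hi].
have -> : nth 0 vs i = mk (mkm (nth tnil ts i)).
  by rewrite /vs (nth_map (mkm tnil)) ?size_map // (nth_map tnil).
rewrite IH // /vee multilin_set ?size_map //.
rewrite (big_morph _ (extD _) (ext0 _)).
by apply: eq_bigr => n _; rewrite extU.
Qed.

Lemma term2 j ts i n : reduced (Node ts) -> (i < size ts)%N -> (n < nleaves (nth tnil ts i))%N ->
  vee_mono (set_nth (mono1 X) (map mkm ts) i (mkm (relabel n j (nth tnil ts i)))) =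
  mkm (relabel (offs ts i + n) j (Node ts)).
Proof.
move=> Hr Hi Hn; have /andP[Hs Ha] := Hr.
set L := take i ts ++ relabel n j (nth tnil ts i) :: drop i.+1 ts.
have HL : relabel (offs ts i + n) j (Node ts) = Node L.
  rewrite /relabel maplN (@mapls_one _ _ ts i tnil) //.
  - congr (Node (_ ++ mapl _ _ :: _)); apply: functional_extensionality => m.
    by rewrite addnC eqn_add2l.
  - move=> m x Hm; rewrite ltn_eqF //; apply: leq_trans Hm (leq_addr _ _).
  - move=> m x Hm; rewrite gtn_eqF //; apply: leq_trans Hm.
    by rewrite offsS // ltn_add2l.
have HrL : reduced (Node L) by rewrite -HL; have [-> _] := mapl_shape (fun n0 x => if n0 == (offs ts i + n)%N then j else x) (Node ts).
have /andP[HsL HaL] := HrL.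
rewrite HL (@vee_mono_red _ L); first by rewrite red_id.
  rewrite pmap_set // val_mkm ?map_red_id //.
  have [-> _] := mapl_shape (fun n0 x => if n0 == n then j else x) (nth tnil ts i).
  by apply/(allP Ha)/mem_nth.
by apply: leq_trans HsL.
Qed.

Lemma term1 ts i n : reduced (Node ts) -> (i < size ts)%N -> (n < nleaves (nth tnil ts i))%N ->
  vee_mono (set_nth (mono1 X) (map mkm ts) i
     (mk_mono (omap (@red X) (restr (fun m => m != n) (nth tnil ts i))))) =
  mk_mono (omap (@red X) (restr (fun m => m != (offs ts i + n)%N) (Node ts))).
Proof.
move=> Hr Hi Hn; have /andP[Hs Ha] := Hr.
set o := restr (fun m => m != n) (nth tnil ts i).
set C := take i ts ++ ocons o (drop i.+1 ts).
have HR : restrs (fun m => m != (offs ts i + n)%N) ts = C.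
  rewrite (@restrs_one _ _ ts i tnil) //.
  - congr (_ ++ ocons (restr _ _) _); apply: functional_extensionality => m.
    by rewrite addnC eqn_add2l.
  - by move=> m Hm; rewrite ltn_eqF //; apply: leq_trans Hm (leq_addr _ _).
  - move=> m Hm; rewrite gtn_eqF //; apply: leq_trans Hm.
    by rewrite offsS // ltn_add2l.
have HC : (0 < size C)%N.
  rewrite /C size_cat size_take Hi.
  have : (size (drop i.+1 ts) <= size (ocons o (drop i.+1 ts)))%N by case: (o).
  rewrite size_drop => H; lia.
rewrite restrN HR.
have -> : (if C is [::] then None else Some (Node C)) = Some (Node C) by case: (C) HC.
apply: vee_mono_red => //.
have [H1 _] := all_take_drop i Ha; have [_ H2] := all_take_drop i.+1 Ha.
rewrite pmap_set // /mk_mono insubdK; last exact: reducedo_red.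
rewrite /C map_cat (map_red_id H1).
by case: (o) => [v|] /=; rewrite map_red_id.
Qed.

Lemma claim2 j (D : {linear V -> V}) : is_partial2 k j D -> forall t, reduced t ->
  D (mk (mkm t)) = \sum_(0 <= n < nleaves t | nth k (leaves t) n == k) mk (mkm (relabel n j t)).
Proof.
move=> [Hd Hx]; elim/tree_ind2 => [x|ts IH] Hr.
  change (D (xvar K x) = \sum_(0 <= n < 1 | nth k [:: x] n == k) mk (mkm (relabel n j (Leaf x)))).
  rewrite Hx big_mkcond big_nat1 /=.
  by case: (x == k).
rewrite (@deriv_node D ts (fun t n => mkm (relabel n j t))) //; last first.
  move=> i Hi; apply: IH; first exact: nth_in.
  by have /andP[_ /allP Ha] := Hr; apply/Ha/mem_nth.
rewrite /nleaves [leaves (Node ts)]/= reindex size_map.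
apply: eq_big_nat => i /andP[_ Hi].
have -> : nth [::] (map (@leaves X) ts) i = leaves (nth tnil ts i) by rewrite (nth_map tnil).
have -> : sumn (map size (take i (map (@leaves X) ts))) = offs ts i by rewrite -map_take -map_comp.
rewrite big_mkcond [RHS]big_mkcond; apply: eq_big_nat => n /andP[_ Hn].
case: ifP => _; last reflexivity.
by rewrite term2.
Qed.

Lemma mk_mono_None : mk_mono (None : option (tree X)) = mono1 X.
Proof. by apply: val_inj; rewrite /mk_mono insubdK. Qed.

Lemma claim1 (D : {linear V -> V}) : is_partial k D -> forall t, reduced t ->
  D (mk (mkm t)) = \sum_(0 <= n < nleaves t | nth k (leaves t) n == k)
     mk (mk_mono (omap (@red X) (restr (fun m => m != n) t))).
Proof.
move=> [Hd Hx]; elim/tree_ind2 => [x|ts IH] Hr.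
  change (D (xvar K x) = \sum_(0 <= n < 1 | nth k [:: x] n == k)
     mk (mk_mono (omap (@red X) (restr (fun m => m != n) (Leaf x))))).
  rewrite Hx big_mkcond big_nat1 /= mk_mono_None.
  by case: (x == k); rewrite ?scale1r ?scale0r.
rewrite (@deriv_node D ts (fun t n => mk_mono (omap (@red X) (restr (fun m => m != n) t)))) //; last first.
  move=> i Hi; apply: IH; first exact: nth_in.
  by have /andP[_ /allP Ha] := Hr; apply/Ha/mem_nth.
rewrite /nleaves [leaves (Node ts)]/= reindex size_map.
apply: eq_big_nat => i /andP[_ Hi].
have -> : nth [::] (map (@leaves X) ts) i = leaves (nth tnil ts i) by rewrite (nth_map tnil).
have -> : sumn (map size (take i (map (@leaves X) ts))) = offs ts i by rewrite -map_take -map_comp.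
rewrite big_mkcond [RHS]big_mkcond; apply: eq_big_nat => n /andP[_ Hn].
case: ifP => _; last reflexivity.
by rewrite term1.
Qed.

End Alg.

Local Close Scope fset_scope.

Theorem proposition4p2p6 (K : fieldType) (X : countType)
  (charK : [pchar K] =i pred0) (T : mono X) (k : X) :
  (forall (j : X) (D : {linear KX K X -> KX K X}), is_partial2 k j D ->
     D << T >> =
     \sum_(i < size (leaveso (val T)) | nth k (leaveso (val T)) i == k)
        << mk_mono (omap (relabel i j) (val T)) >>) /\
  (forall D : {linear KX K X -> KX K X}, is_partial k D ->
     D << T >> =
     \sum_(i < size (leaveso (val T)) | nth k (leaveso (val T)) i == k)
        << mk_mono (omap (@red X)
              (obind (restr (fun n => n != i)) (val T))) >>).
Proof.
case: T => [[t|] H].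
  have ET : exist _ (Some t) H = mkm t by apply: val_inj; rewrite /= val_mkm.
  rewrite ET /= val_mkm //.
  split.
    move=> j D HD.
    change (D (@mk K X (mkm t)) = \sum_(i < size (leaves t) | nth k (leaves t) i == k)
        @mk K X (mkm (relabel i j t))).
    rewrite (claim2 HD H) -(big_mkord (fun i => nth k (leaves t) i == k) (fun i => @mk K X (mkm (relabel i j t)))); reflexivity.
  move=> D HD.
  change (D (@mk K X (mkm t)) = \sum_(i < size (leaves t) | nth k (leaves t) i == k)
        @mk K X (mk_mono (omap (@red X) (restr (fun n => n != i) t)))).
  rewrite (claim1 HD H) -(big_mkord (fun i => nth k (leaves t) i == k) (fun i => @mk K X (mk_mono (omap (@red X) (restr (fun n => n != i) t))))); reflexivity.
have E1 : exist _ None H = mono1 X by apply: val_inj.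
rewrite E1 /= big_ord0.
split => [j D [[Hd _] _]|D [[Hd _] _]]; by rewrite -[<< mono1 X >>]scale1r Hd.
Qed.
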